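(* Let $u_1=(1,0)$, $u_2=(0,1)$, $u_3=(-1,-1)$ in $\mathbb{Z}^2$, $S=\{u_1,u_2,u_3\}$, $P_{u_i}=P_i$ ($i=1,2,3$) the orthogonal projection of $\mathbb{C}^3$ onto $\mathbb{C}\mathbf{e}_i$, $\mathcal{S}=\sum_{i=1}^3\tau^{u_i}P_{u_i}$ and $G_3=\frac23J-I$ with $J$ the $3\times3$ all-ones matrix. Then the unitary operator $\mathcal{S}^*G_3\mathcal{S}G_3$ on $\ell^2(\mathbb{Z}^2,\mathbb{C}^3)$ has eigenvalue $1$.
   Context: $(\tau^\alpha f)(x)=f(x-\alpha)$ on $\ell^2(\mathbb{Z}^2,\mathbb{C}^3)$; $G_3$ acts pointwise; $\mathbf{e}_1,\mathbf{e}_2,\mathbf{e}_3$ is the standard basis of $\mathbb{C}^3$. Eigenvalue means point spectrum. *)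

(* Defs.v *)
From Stdlib Require Import Reals ZArith List.
Open Scope R_scope.

Record Cplx := mkC { re : R; im : R }.
Definition Cadd (a b : Cplx) : Cplx := mkC (re a + re b) (im a + im b).
Definition Csub (a b : Cplx) : Cplx := mkC (re a - re b) (im a - im b).
Definition Cscal (r : R) (a : Cplx) : Cplx := mkC (r * re a) (r * im a).
Definition C0 : Cplx := mkC 0 0.
Definition Cnorm2 (a : Cplx) : R := re a * re a + im a * im a.

Inductive idx3 := i1 | i2 | i3.

Definition C3 := idx3 -> Cplx.
Definition field := (Z * Z)%type -> C3.

Definition u (i : idx3) : Z * Z :=
  match i with i1 => (1, 0)%Z | i2 => (0, 1)%Z | i3 => ((-1), (-1))%Z end.

Definition zadd (a b : Z * Z) : Z * Z := (fst a + fst b, snd a + snd b)%Z.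
Definition zsub (a b : Z * Z) : Z * Z := (fst a - fst b, snd a - snd b)%Z.

Definition tau (alpha : Z * Z) (f : field) : field := fun x => f (zsub x alpha).

Definition Pj (i : idx3) (v : C3) : C3 :=
  fun j => match i, j with
           | i1, i1 | i2, i2 | i3, i3 => v j
           | _, _ => C0 end.

Definition fadd (f g : field) : field := fun x j => Cadd (f x j) (g x j).

Definition Sop (f : field) : field :=
  fadd (tau (u i1) (fun x => Pj i1 (f x)))
    (fadd (tau (u i2) (fun x => Pj i2 (f x)))
          (tau (u i3) (fun x => Pj i3 (f x)))).

(* Its adjoint S^* = sum_i P_{u_i} tau^{-u_i}. *)
Definition Sadj (f : field) : field :=
  fadd (fun x => Pj i1 (f (zadd x (u i1))))
    (fadd (fun x => Pj i2 (f (zadd x (u i2))))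
          (fun x => Pj i3 (f (zadd x (u i3))))).

Definition G3 (v : C3) : C3 :=
  fun j => Csub (Cscal (2/3) (Cadd (v i1) (Cadd (v i2) (v i3)))) (v j).
Definition Gop (f : field) : field := fun x => G3 (f x).

Definition Uop (f : field) : field := Sadj (Gop (Sop (Gop f))).

Definition C3norm2 (v : C3) : R := Cnorm2 (v i1) + Cnorm2 (v i2) + Cnorm2 (v i3).

(* Membership in l^2(Z^2, C^3): the nonnegative family |f(x)|^2 is summable,
   i.e. its sums over finite sets of distinct points are uniformly bounded. *)
Definition in_l2 (f : field) : Prop :=
  exists B : R, forall l : list (Z * Z), NoDup l ->
    fold_right (fun x acc => C3norm2 (f x) + acc) 0 l <= B.

Definition has_eigenvalue_one (T : field -> field) : Prop :=
  exists f : field, in_l2 f /\ (exists x j, f x j <> C0) /\ T f = f.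

(* Main.v *)
Require Import Defs.
From Stdlib Require Import Reals ZArith List.
From Stdlib Require Import Lra Lia FunctionalExtensionality.
Open Scope R_scope.

Definition v1 (j : idx3) : Cplx := match j with i1 => mkC (-1) 0 | i2 => mkC 1 0 | i3 => C0 end.
Definition v2 (j : idx3) : Cplx := match j with i1 => mkC 1 0 | i2 => C0 | i3 => mkC (-1) 0 end.
Definition v3 (j : idx3) : Cplx := match j with i1 => C0 | i2 => mkC (-1) 0 | i3 => mkC 1 0 end.

Definition fv (a b : Z) : C3 :=
  if andb (a =? -1)%Z (b =? -1)%Z then v1
  else if andb (a =? 0)%Z (b =? 1)%Z then v2
  else if andb (a =? 1)%Z (b =? 0)%Z then v3
  else fun _ => C0.

Definition ef : field := fun x => fv (fst x) (snd x).

Definition pdec : forall x y : Z * Z, {x = y} + {x <> y}.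
Proof. decide equality; apply Z.eq_dec. Defined.

Section B.
Variable g : Z * Z -> R.
Definition ind (p : Z * Z) (l : list (Z * Z)) : R :=
  if in_dec pdec p l then g p else 0.

Lemma ind_mono p x l : (forall y, 0 <= g y) -> ind p l <= ind p (x :: l).
Proof.
  intros Hg; unfold ind.
  destruct (in_dec pdec p l) as [H|H]; destruct (in_dec pdec p (x :: l)) as [H'|H'];
    try lra.
  - exfalso; apply H'; right; exact H.
  - apply Hg.
Qed.

Lemma ind_hit p l : ~ In p l -> ind p (p :: l) = g p + ind p l.
Proof.
  intros H; unfold ind.
  destruct (in_dec pdec p l) as [H1|H1]; [contradiction|].
  destruct (in_dec pdec p (p :: l)) as [H2|H2]; [lra|].
  exfalso; apply H2; left; reflexivity.
Qed.

Lemma fold_bound p1 p2 p3 :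
  (forall x, 0 <= g x) ->
  (forall x, x <> p1 -> x <> p2 -> x <> p3 -> g x = 0) ->
  p1 <> p2 -> p1 <> p3 -> p2 <> p3 ->
  forall l, NoDup l ->
  fold_right (fun x acc => g x + acc) 0 l <= ind p1 l + ind p2 l + ind p3 l.
Proof.
  intros Hg H0 d12 d13 d23 l Hl.
  induction Hl as [|x l Hx Hl IH].
  - unfold ind; simpl; lra.
  - simpl fold_right.
    pose proof (ind_mono p1 x l Hg); pose proof (ind_mono p2 x l Hg);
    pose proof (ind_mono p3 x l Hg).
    destruct (pdec x p1) as [->|n1].
    { rewrite ind_hit by exact Hx. lra. }
    destruct (pdec x p2) as [->|n2].
    { rewrite (ind_hit p2) by exact Hx. lra. }
    destruct (pdec x p3) as [->|n3].
    { rewrite (ind_hit p3) by exact Hx. lra. }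
    rewrite (H0 x n1 n2 n3). lra.
Qed.
End B.

Ltac zsplit :=
  repeat match goal with
  | |- context [(?a =? ?b)%Z] =>
      destruct (Z.eqb_spec a b); try (exfalso; lia); simpl
  end.

Lemma ef_zero x : x <> ((-1)%Z, (-1)%Z) -> x <> (0%Z, 1%Z) -> x <> (1%Z, 0%Z) ->
  C3norm2 (ef x) = 0.
Proof.
  destruct x as [a b]; intros h1 h2 h3; unfold ef, fv; simpl.
  zsplit; try (exfalso; subst; congruence).
  all: unfold C3norm2, Cnorm2, C0; simpl; lra.
Qed.

Lemma ef_in_l2 : in_l2 ef.
Proof.
  exists (C3norm2 (ef ((-1)%Z, (-1)%Z)) + C3norm2 (ef (0%Z, 1%Z)) + C3norm2 (ef (1%Z, 0%Z))).
  intros l Hl.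
  assert (Hg : forall y, 0 <= C3norm2 (ef y)).
  { intros y; unfold C3norm2, Cnorm2.
    repeat match goal with |- context [re ?c] => set (re c) end.
    repeat match goal with |- context [im ?c] => set (im c) end. nra. }
  eapply Rle_trans.
  - apply (fold_bound (fun x => C3norm2 (ef x)) ((-1)%Z, (-1)%Z) (0%Z, 1%Z) (1%Z, 0%Z));
      auto; try (intro H; inversion H); apply ef_zero.
  - unfold ind.
    repeat destruct in_dec; pose proof (Hg ((-1)%Z, (-1)%Z));
      pose proof (Hg (0%Z, 1%Z)); pose proof (Hg (1%Z, 0%Z)); lra.
Qed.

Theorem corollary5p2 : has_eigenvalue_one Uop.
Proof.
  exists ef. split; [exact ef_in_l2|]. split.
  - exists ((-1)%Z, (-1)%Z), i1. unfold ef, fv; simpl. intro H; inversion H; lra.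
  - apply functional_extensionality; intros [a b].
    apply functional_extensionality; intros j.
    unfold Uop, Sadj, Gop, Sop, tau, fadd, Pj, G3, ef, fv, zadd, zsub, u; simpl.
    destruct j; simpl; zsplit;
      unfold v1, v2, v3, Cadd, Csub, Cscal, C0; simpl; f_equal; lra.
Qed.
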